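(* Let $i,j,m\in\mathbb{N}$, and let $A=(a_0,\dots,a_i)$ and $B=(b_0,\dots,b_j)$ be finite sequences of positive integers satisfying $m[a_i,\dots,a_0]=[b_0,\dots,b_j]$. Then the concatenation $BA=(b_0,\dots,b_j,a_0,\dots,a_i)$ is an $m$-palindrome if and only if $m[a_i,\dots,a_1]=[b_0,\dots,b_{j-1}]$.
   Context: For a finite sequence $(c_0,\dots,c_k)$ of positive integers, $[c_0,\dots,c_k]$ denotes the value of the finite continued fraction $c_0+\cfrac{1}{c_1+\cfrac{1}{\ddots+\cfrac{1}{c_k}}}$. A finite sequence $(c_0,\dots,c_k)$ of positive integers is an $m$-palindrome ($m\in\mathbb{N}$) if $[c_0,\dots,c_k]=m\,[c_k,\dots,c_0]$. *)

(* Defs.v *)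
From mathcomp Require Import all_boot all_order all_algebra.
Set Implicit Arguments. Unset Strict Implicit. Unset Printing Implicit Defensive.
Import Order.TTheory GRing.Theory Num.Theory.
Local Open Scope ring_scope.

(* Value of a finite continued fraction [c_0, ..., c_k] over the rationals.
   Intended for non-empty sequences; [cf [::]] is a dummy value 0. *)
Fixpoint cf (s : seq nat) : rat :=
  match s with
  | [::] => 0
  | [:: c] => c%:R
  | c :: s' => c%:R + (cf s')^-1
  end.

(* Extended value: the empty continued fraction has value infinity (None),
   following the convergent convention p_{-1}/q_{-1} = 1/0. *)
Definition cf_ext (s : seq nat) : option rat :=
  if s is [::] then None else Some (cf s).

Definition scaled_eq (m : nat) (x y : option rat) : Prop :=
  match x, y with
  | Some x, Some y => m%:R * x = y
  | None, None => True
  | _, _ => False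
  end.

Definition m_palindrome (m : nat) (s : seq nat) : Prop :=
  cf s = m%:R * cf (rev s).

(* Main.v *)
Require Import Defs.
From mathcomp Require Import all_boot all_order all_algebra.
From mathcomp Require Import ring lra.
Import Order.TTheory GRing.Theory Num.Theory.
Local Open Scope ring_scope.

Record M2 := mk { ea : rat; eb : rat; ec : rat; ed : rat }.
Definition mmul (x y : M2) := mk (ea x * ea y + eb x * ec y) (ea x * eb y + eb x * ed y)
  (ec x * ea y + ed x * ec y) (ec x * eb y + ed x * ed y).
Definition Mc (n : nat) := mk n%:R 1 1 0.
Definition tr (x : M2) := mk (ea x) (ec x) (eb x) (ed x).
Fixpoint mat (s : seq nat) : M2 :=
  match s with [::] => mk 1 0 0 1 | x :: s => mmul (Mc x) (mat s) end.

Lemma mmul1 x : mmul (mk 1 0 0 1) x = x.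
Proof. case: x => a b c d; rewrite /mmul /=; congr mk; ring. Qed.
Lemma mmulA x y z : mmul x (mmul y z) = mmul (mmul x y) z.
Proof. case: x => ? ? ? ?; case: y => ? ? ? ?; case: z => ? ? ? ?; rewrite /mmul /=; congr mk; ring. Qed.

Lemma mat_cat s t : mat (s ++ t) = mmul (mat s) (mat t).
Proof. elim: s => [|x s IH] /=; first by rewrite mmul1. by rewrite IH mmulA. Qed.

Lemma mat_rev s : mat (rev s) = tr (mat s).
Proof.
elim: s => [|x s IH]; first by [].
rewrite rev_cons -cats1 mat_cat IH /= .
case: (mat s) => a b c d; rewrite /mmul /tr /=; congr mk; ring.
Qed.

Lemma mat_cf s : all (fun c => 0 < c)%N s -> s != [::] ->
  0 < ea (mat s) /\ 0 < eb (mat s) /\ 0 < ec (mat s) /\ 0 <= ed (mat s)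
  /\ cf s = ea (mat s) / ec (mat s).
Proof.
elim: s => [|x s IH] //= /andP [hx hs] _.
have hx' : 0 < (x%:R : rat) by rewrite ltr0n.
case: s IH hs => [|y s] IH hs.
  rewrite /= !mulr0 !mulr1 !addr0 !add0r. by do !split; rewrite ?ltr01 ?lexx.
have [h1 [h2 [h3 [h4 h5]]]] := IH hs isT.
move: h1 h2 h3 h4 h5; set s' := y :: s; set m := mat s'.
case: m => a b c d /= h1 h2 h3 h4 ->.
rewrite !mul1r !mul0r !addr0.
split; first by nra. split; first by nra. split => //. split; first by lra.
field; rewrite gt_eqF //=; nra.
Qed.

Lemma core (m P P' Q Q' R R' S S' : rat) :
  0 < P -> 0 < Q -> 0 < R -> 0 < R' -> 0 < S -> 0 <= P' -> 0 <= Q' -> 0 <= S' ->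
  m * (R / R') = P / Q ->
  ((P * R + P' * S) / (Q * R + Q' * S) = m * ((P * R + P' * S) / (P * R' + P' * S'))
   <-> P' * S' = m * (Q' * S)).
Proof.
move=> hP hQ hR hR' hS hP' hQ' hS' H.
have HQ : m * R * Q = P * R'.
  have -> : m * R * Q = (m * (R / R')) * R' * Q by field; rewrite gt_eqF.
  by rewrite H; field; rewrite gt_eqF.
have hX : 0 < P * R + P' * S by nra.
have hY : 0 < Q * R + Q' * S by nra.
have hZ : 0 < P * R' + P' * S' by nra.
rewrite mulrA; split.
- move/eqP; rewrite (eqr_div _ _ (lt0r_neq0 hY) (lt0r_neq0 hZ)) => /eqP E.
  have E2 : (P * R + P' * S) * ((P * R' + P' * S') - m * (Q * R + Q' * S)) = 0.
    by rewrite mulrBr E; ring.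
  move/eqP: E2; rewrite mulf_eq0 gt_eqF //= subr_eq0 => /eqP E3.
  nra.
- move=> E; apply/eqP; rewrite (eqr_div _ _ (lt0r_neq0 hY) (lt0r_neq0 hZ)); apply/eqP.
  have : P * R' + P' * S' = m * (Q * R + Q' * S) by nra.
  move=> ->; ring.
Qed.

Lemma cf_extS s : s != [::] -> cf_ext s = Some (cf s).
Proof. by case: s. Qed.

Lemma trA x : ea (tr x) = ea x. Proof. by []. Qed.
Lemma trC x : ec (tr x) = eb x. Proof. by []. Qed.

Lemma allpos_rev s : all (fun c => 0 < c)%N s -> all (fun c => 0 < c)%N (rev s).
Proof. by rewrite all_rev. Qed.

Theorem lemma3p4 (i j m : nat) (A B : seq nat) :
  size A = i.+1 -> size B = j.+1 ->
  all (fun c => 0 < c)%N A -> all (fun c => 0 < c)%N B ->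
  m%:R * cf (rev A) = cf B ->
  (m_palindrome m (B ++ A) <->
   scaled_eq m (cf_ext (rev (behead A))) (cf_ext (take j B))).
Proof.
case: A => [|a0 A'] // hA.
case/lastP: B => [|B1 b] // hB pA pB H.
have hB1 : size B1 = j by move: hB; rewrite size_rcons => -[].
rewrite -cats1 take_size_cat //= .
move: pA pB H; rewrite /m_palindrome -cats1.
set A := a0 :: A'; set B := B1 ++ [:: b] => pA pB H.
have nA : A != [::] by [].
have nB : B != [::] by rewrite /B; case: (B1).
have [hP [hP' [hQ [hQ' eB]]]] := mat_cf B pB nB.
have eS : ec (mat A) = ea (mat A') by rewrite /A /= mul1r mul0r addr0.
have eS' : ed (mat A) = eb (mat A') by rewrite /A /= mul1r mul0r addr0.
have eP' : eb (mat B) = ea (mat B1) by rewrite /B mat_cat /= !(mulr1,mulr0,mul1r,mul0r,addr0,add0r).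
have eQ' : ed (mat B) = ec (mat B1) by rewrite /B mat_cat /= !(mulr1,mulr0,mul1r,mul0r,addr0,add0r).
have pA' : all (fun c => 0 < c)%N A' by move: pA; rewrite /A /= => /andP[].
have pB1 : all (fun c => 0 < c)%N B1 by move: pB; rewrite /B all_cat => /andP[].
clearbody A B.
have nrA : rev A != [::] by rewrite -size_eq0 size_rev size_eq0.
have [hR [_ [hR' [_ eA]]]] := mat_cf _ (allpos_rev _ pA) nrA.
have [_ [_ [hS [hS' _]]]] := mat_cf _ pA nA.
have pBA : all (fun c => 0 < c)%N (B ++ A) by rewrite all_cat pA pB.
have nBA : B ++ A != [::] by rewrite -size_eq0 size_cat addn_eq0 size_eq0 (negbTE nB).
have [_ [_ [_ [_ eBA]]]] := mat_cf _ pBA nBA.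
have nrBA : rev (B ++ A) != [::] by rewrite -size_eq0 size_rev size_eq0.
have [_ [_ [_ [_ erBA]]]] := mat_cf _ (allpos_rev _ pBA) nrBA.
rewrite mat_rev /= in hR hR' eA.
rewrite eA eB in H.
rewrite eBA erBA mat_rev mat_cat /=.
apply: iff_trans (core _ _ _ _ _ _ _ _ _ hP hQ hR hR' hS (ltW hP') hQ' hS' H) _.
have hm : (m%:R : rat) != 0.
  apply/negP => /eqP hm0; move: H; rewrite hm0 mul0r => H0.
  by move: (divr_gt0 hP hQ); rewrite -H0 ltxx.
rewrite eS eS' eP' eQ'; rewrite eP' in hP'; rewrite eS in hS.
clear hB hB1 hA; case: B1 eP' eQ' pB1 hP' => [|y B1'] eP' eQ' pB1 hP';
  case: A' eS eS' pA' hS => [|x A''] eS eS' pA' hS.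
- by rewrite /=; split => // _; rewrite mulr0 mul0r mulr0.
- have [_ [hu' _]] := mat_cf _ pA' isT.
  have nrA' : rev (x :: A'') != [::] by rewrite -size_eq0 size_rev.
  rewrite (cf_extS _ nrA') [ea (mat [::])]/= [ec (mat [::])]/= mul1r mul0r mulr0.
  by split => [E|[]]; move: hu'; rewrite E ltxx.
- have [_ [_ [hq _]]] := mat_cf _ pB1 isT.
  rewrite [eb (mat [::])]/= mulr0; split => // /esym/eqP.
  by rewrite !mulf_eq0 (negbTE hm) !gt_eqF.
- have [_ [_ [hq [_ eB1]]]] := mat_cf _ pB1 isT.
  have nrA' : rev (x :: A'') != [::] by rewrite -size_eq0 size_rev.
  have [_ [_ [hu' [_ eA']]]] := mat_cf _ (allpos_rev _ pA') nrA'.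
  rewrite mat_rev trA trC in hu' eA'.
  have nB1 : y :: B1' != [::] by [].
  rewrite (cf_extS _ nrA') (cf_extS _ nB1) eA' eB1.
  set p := ea (mat (y :: B1')) in hP' *; set q := ec (mat (y :: B1')) in hq *.
  set u := ea (mat (x :: A'')) in hS *; set u' := eb (mat (x :: A'')) in hu' *.
  rewrite /scaled_eq; split => E.
  + apply/eqP; rewrite mulrA (eqr_div _ _ (lt0r_neq0 hu') (lt0r_neq0 hq)); apply/eqP.
    by rewrite E; ring.
  + move/eqP: E; rewrite mulrA (eqr_div _ _ (lt0r_neq0 hu') (lt0r_neq0 hq)) => /eqP E.
    by rewrite -E; ring.
Qed.
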